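(* Let $S$ be a unital ring and let $n\geq2$. Then $\xi(M_n(S))\leq 2$; that is, for every $a\in M_n(S)$ there exist $b_1,c_1,d_1,e_1,b_2,c_2,d_2,e_2\in M_n(S)$ such that \[ a=[b_1,c_1][d_1,e_1]+[b_2,c_2][d_2,e_2]. \]
   Context: $M_n(S)$ is the ring of $n\times n$ matrices over $S$, and $[x,y]=xy-yx$. For a unital ring $R$ generated by its commutators, $\xi(R)$ is the minimal $N\in\mathbb{N}$ such that every element of $R$ is a sum of $N$ elements of the form $[b,c][d,e]$ with $b,c,d,e\in R$. *)

(* Defs.v *)
From mathcomp Require Import all_boot all_algebra.
Set Implicit Arguments. Unset Strict Implicit. Unset Printing Implicit Defensive.
Import GRing.Theory.
Local Open Scope ring_scope.

Definition mxcomm (S : pzRingType) (n : nat) (x y : 'M[S]_n) : 'M[S]_n :=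
  x *m y - y *m x.

(* Main.v *)
Require Import Defs.
From mathcomp Require Import all_boot all_algebra zify.
Set Implicit Arguments. Unset Strict Implicit. Unset Printing Implicit Defensive.
Import GRing.Theory.
Local Open Scope ring_scope.

Lemma tele (R : pzRingType) (Z Z' F T : R) (m : nat) :
  Z * Z' = 1 - F -> Z ^+ m = 0 ->
  Z * (\sum_(0 <= k < m) Z' ^+ k.+1 * T * Z ^+ k)
  - (\sum_(0 <= k < m) Z' ^+ k.+1 * T * Z ^+ k) * Z
  = T - F * (\sum_(0 <= k < m) Z' ^+ k * T * Z ^+ k).
Proof.
move=> hZ hm.
have e1 : Z * (\sum_(0 <= k < m) Z' ^+ k.+1 * T * Z ^+ k)
   = \sum_(0 <= k < m) Z' ^+ k * T * Z ^+ k - F * (\sum_(0 <= k < m) Z' ^+ k * T * Z ^+ k).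
  rewrite !mulr_sumr -sumrB; apply: eq_bigr => k _.
  by rewrite exprS -!mulrA mulrA hZ mulrBl mul1r.
have e2 : (\sum_(0 <= k < m) Z' ^+ k.+1 * T * Z ^+ k) * Z
   = \sum_(0 <= k < m) Z' ^+ k.+1 * T * Z ^+ k.+1.
  by rewrite mulr_suml; apply: eq_bigr => k _; rewrite -mulrA -exprSr.
rewrite e1 e2 addrAC -sumrB.
have := telescope_sumr (fun k => Z' ^+ k * T * Z ^+ k) (leq0n m).
rewrite hm mulr0 expr0 mulr1 mul1r sub0r => h.
rewrite -[X in X - _ = _](opprK) -sumrN.
rewrite (eq_bigr (fun k => Z' ^+ k.+1 * T * Z ^+ k.+1 - Z' ^+ k * T * Z ^+ k)); last first.
  by move=> k _; rewrite opprB.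
by rewrite h opprK.
Qed.
Section M.
Variable S : pzRingType.

Lemma sum_delta_in n (m : nat) (F : 'I_n -> S) (h : (m < n)%N) :
  \sum_(l < n) ((m == l :> nat)%:R * F l) = F (Ordinal h).
Proof.
rewrite (bigD1 (Ordinal h)) //= eqxx mul1r big1 ?addr0 // => l hl.
have -> : (m == l :> nat) = false.
  by apply/negbTE; apply: contra hl => /eqP e; apply/eqP/val_inj; rewrite /= e.
by rewrite mul0r.
Qed.

Lemma sum_delta_out n (m : nat) (F : 'I_n -> S) (h : (n <= m)%N) :
  \sum_(l < n) ((m == l :> nat)%:R * F l) = 0.
Proof.
rewrite big1 // => l _.
have -> : (m == l :> nat) = false by apply/negbTE; rewrite neq_ltn (leq_trans (ltn_ord l) h) orbT.
by rewrite mul0r.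
Qed.

Definition Nm n : 'M[S]_n := \matrix_(i, j) ((i.+1 == j :> nat)%:R).
Definition Nt n : 'M[S]_n := \matrix_(i, j) ((j.+1 == i :> nat)%:R).

Lemma Nm_exp n k : (Nm n) ^+ k = \matrix_(i, j) (((i + k)%N == j :> nat)%:R).
Proof.
elim: k => [|k IH].
  by apply/matrixP => i j; rewrite expr0 !mxE addn0.
apply/matrixP => i j; rewrite exprS -mulmxE IH !mxE.
rewrite (eq_bigr (fun l : 'I_n => ((i.+1 == l :> nat)%:R * ((l + k)%N == j :> nat)%:R))); last first.
  by move=> l _; rewrite !mxE.
case: (ltnP i.+1 n) => h; first by rewrite (sum_delta_in _ h) /= addSnnS.
rewrite (sum_delta_out _ h).
have -> : ((i + k.+1)%N == j :> nat) = false.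
  by apply/negbTE; have := ltn_ord j; lia.
by [].
Qed.

Lemma Nt_exp n k : (Nt n) ^+ k = \matrix_(i, j) (((j + k)%N == i :> nat)%:R).
Proof.
elim: k => [|k IH].
  by apply/matrixP => i j; rewrite expr0 !mxE addn0 eq_sym.
apply/matrixP => i j; rewrite exprSr -mulmxE IH !mxE.
rewrite (eq_bigr (fun l : 'I_n => ((j.+1 == l :> nat)%:R * ((l + k)%N == i :> nat)%:R))); last first.
  by move=> l _; rewrite !mxE -natrM mulnC natrM.
case: (ltnP j.+1 n) => h; first by rewrite (sum_delta_in _ h) /= addSnnS.
rewrite (sum_delta_out _ h).
have -> : ((j + k.+1)%N == i :> nat) = false.
  by apply/negbTE; have := ltn_ord i; lia.
by [].
Qed.

Lemma NmNt n : Nm n.+1 *m Nt n.+1 = 1%:M - delta_mx ord_max ord_max.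
Proof.
apply/matrixP => i j; rewrite !mxE.
rewrite (eq_bigr (fun l : 'I_n.+1 => ((i.+1 == l :> nat)%:R * (j.+1 == l :> nat)%:R))); last first.
  by move=> l _; rewrite !mxE.
case: (ltnP i.+1 n.+1) => h.
  rewrite (sum_delta_in _ h) /=.
  have -> : (i == ord_max) = false by apply/negbTE; apply/eqP => e; move: h; rewrite e /=; lia.
  by rewrite /= subr0 eqSS eq_sym.
rewrite (sum_delta_out _ h).
have ei : i = ord_max by apply/val_inj => /=; have := ltn_ord i; lia.
subst i; rewrite eqxx /= [j == _]eq_sym; case: (_ == j); by rewrite ?subrr ?subr0.
Qed.

Lemma NtNm n : Nt n.+1 *m Nm n.+1 = 1%:M - delta_mx 0 0.
Proof.
apply/matrixP => i j; rewrite !mxE.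
rewrite (eq_bigr (fun l : 'I_n.+1 => ((l.+1 == i :> nat)%:R * (l.+1 == j :> nat)%:R))); last first.
  by move=> l _; rewrite !mxE.
case: (posnP i) => hi.
  rewrite big1; last by move=> l _; rewrite hi mul0r.
  rewrite -!(inj_eq val_inj) /= hi /= eq_sym.
  by case: (_ == _); rewrite subrr.
rewrite (eq_bigr (fun l : 'I_n.+1 => ((i.-1 == l :> nat)%:R * (l.+1 == j :> nat)%:R))); last first.
  move=> l _; congr (_ * _); congr ((nat_of_bool _)%:R); apply/idP/idP => /eqP e; apply/eqP; [by rewrite -e | by rewrite -e prednK].
have h : (i.-1 < n.+1)%N by have := ltn_ord i; lia.
rewrite (sum_delta_in _ h) /= prednK //.
have -> : (i == 0) = false by apply/negbTE; rewrite -(inj_eq val_inj) /= -lt0n.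
by rewrite /= subr0.
Qed.

Lemma Nt_delta n : Nt n.+1 *m delta_mx (@ord_max n) (@ord_max n) = 0.
Proof.
apply/matrixP => i j; rewrite !mxE big1 // => l _; rewrite !mxE.
case: (eqVneq l ord_max) => [->|hl]; last by rewrite andFb mulr0.
have -> : ((@ord_max n).+1 == i :> nat) = false by apply/negbTE; have := ltn_ord i; rewrite /=; lia.
by rewrite mul0r.
Qed.

Lemma Nm_nil n : Nm n ^+ n = 0.
Proof.
rewrite Nm_exp; apply/matrixP => i j; rewrite !mxE.
have -> : ((i + n)%N == j :> nat) = false by apply/negbTE; have := ltn_ord j; lia.
by [].
Qed.

Lemma Nt_nil n : Nt n ^+ n = 0.
Proof.
rewrite Nt_exp; apply/matrixP => i j; rewrite !mxE.
have -> : ((j + n)%N == i :> nat) = false by apply/negbTE; have := ltn_ord i; lia.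
by [].
Qed.

Definition Dm n : 'M[S]_n := diag_mx (\row_(i < n) (i : nat)%:R).

Lemma Dm_comm n : Dm n *m Nt n - Nt n *m Dm n = Nt n.
Proof.
rewrite /Dm mul_diag_mx mul_mx_diag; apply/matrixP => i j; rewrite !mxE.
case: (eqVneq (j.+1 : nat) i) => [<-|h]; last by rewrite /= mulr0 mul0r subr0.
by rewrite /= mulr1 mul1r -natrB // subSnn.
Qed.


End M.

Theorem theorem5p4 (S : pzRingType) (n : nat) (hn : (2 <= n)%N) (a : 'M[S]_n) :
  exists b1 c1 d1 e1 b2 c2 d2 e2 : 'M[S]_n,
    a = mxcomm b1 c1 *m mxcomm d1 e1 + mxcomm b2 c2 *m mxcomm d2 e2.
Proof.
case: n hn a => [|[|n]] // _ a.
pose N := Nm S n.+2.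
pose T := Nt S n.+2.
pose o1 : 'I_n.+2 := @Ordinal n.+2 1 isT.
pose F0 : 'M[S]_n.+2 := delta_mx 0 0.
pose F1 : 'M[S]_n.+2 := delta_mx (@ord_max n.+1) (@ord_max n.+1).
pose X1 := \sum_(0 <= k < n.+2) T ^+ k.+1 * (N * a) * N ^+ k.
pose X2 := \sum_(0 <= k < n.+2) N ^+ k.+1 * (delta_mx o1 0 * a) * T ^+ k.
exists (Dm S n.+2), T, N, X1, F0, (delta_mx 0 o1), T, X2.
have hNT : N * T = 1 - F1 by rewrite -mulmxE NmNt.
have hTN : T * N = 1 - F0 by rewrite -mulmxE NtNm.
have h1 := tele (N * a) hNT (Nm_nil S n.+2).
have h2 := tele (delta_mx o1 0 * a) hTN (Nt_nil S n.+2).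
have h3 : T * F1 = 0 by rewrite -mulmxE Nt_delta.
have h4 : delta_mx 0 o1 * F0 = 0 by rewrite -mulmxE mul_delta_mx_0.
have h6 : delta_mx 0 o1 * delta_mx o1 0 = F0 by rewrite -mulmxE mul_delta_mx.
have h7 : mxcomm F0 (delta_mx 0 o1) = delta_mx 0 o1.
  by rewrite /mxcomm mul_delta_mx mul_delta_mx_0 ?subr0.
rewrite h7 {1}/mxcomm Dm_comm /mxcomm !mulmxE h1 h2 !mulrBr !mulrA h3 h4 h6 hTN !mul0r !subr0.
by rewrite mulrBl mul1r subrK.
Qed.
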